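(* Let $T=\{0,\dots,N\}$ and $\mathbb{F}$ a field. Let $K$ be a finite simplicial complex with simplices $\sigma$ and let $K_\bullet\colon\emptyset=K_0\subseteq\dots\subseteq K_N=K$ and $L_\bullet\colon\emptyset=L_0\subseteq\dots\subseteq L_N=K$ be filtrations of $K$ by subcomplexes with $L_t\subseteq K_t$ for all $t$, and let $f_\bullet\colon L_\bullet\to K_\bullet$ be the inclusion. Define $k(\sigma)=\min\{t\mid\sigma\in K_t\}$ and $l(\sigma)=\min\{t\mid\sigma\in L_t\}$. Let $\sigma_1,\dots,\sigma_n$ be the simplices of $K$ ordered so that $l$ is non-decreasing, and $\tau_1,\dots,\tau_n$ the simplices ordered so that $k$ is non-decreasing (fixed orientations). Define $n\times n$ matrices $A$ (playing the role of $(D^L)^\perp$) and $B$ (playing the role of $(D^f)^\perp$) by \[ A_{i,j}=\text{coefficient of }\sigma_{n+1-j}\text{ in }\partial\sigma_{n+1-i},\qquad B_{i,j}=\text{coefficient of }\sigma_{n+1-j}\text{ in }\partial\tau_{n+1-i}, \] so column $j$ of both matrices corresponds to the simplex $\sigma_{n+1-j}$, row $i$ of $A$ to $\sigma_{n+1-i}$ and row $i$ of $B$ to $\tau_{n+1-i}$. Let $V$, $W$ be invertible upper-triangular matrices such that $R=AV$ and $S=BW$ are reduced. For a nonzero column of $R$, $V$ or $W$ let $\operatorname{pivsimp}$ denote the simplex indexing its pivot row under the row correspondence of $A$ (for $R,V,W$), and for a nonzero column of $S$ the simplex indexing its pivot row under the row correspondence of $B$. Then: (a) for every $j$, $s_j=0$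 if and only if $r_j=0$ (so that the reduction of $B$ can be performed with clearing, i.e. columns $j$ with $r_j=0$ may be set to zero in advance); and (b) the persistence module $\operatorname{im}H_*(f_\bullet)$, $t\mapsto\operatorname{im}(H_*(L_t;\mathbb{F})\to H_*(K_t;\mathbb{F}))$, has barcode given by the multiset \[ \left\{[\,l(\operatorname{pivsimp}w_j),\,k(\operatorname{pivsimp}s_j))\;\middle|\; s_j\neq0,\ [\,l(\operatorname{pivsimp}w_j),k(\operatorname{pivsimp}s_j))\neq\emptyset\right\}\cup\left\{[\,l(\operatorname{pivsimp}v_i),\infty)\;\middle|\; r_i=0\text{ and } i\notin\operatorname{pivs}R\right\}, \] where $[a,b)=\{t\in T\mid a\le t<b\}$ and $[a,\infty)=\{t\in T\mid t\ge a\}$.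
   Context: For a matrix $X$, $x_j$ denotes its $j$-th column; the pivot of a nonzero column is the largest row index with a nonzero entry; $\operatorname{pivs}X$ is the set of pivots of nonzero columns; $X$ is reduced if no two nonzero columns have the same pivot. Since rows are indexed in reverse filtration order, the pivot simplex of a column is the earliest (in the respective filtration order) simplex with a nonzero entry. A persistence module indexed by $T$ (functor from the poset $T$ to $\mathbb{F}$-vector spaces) has barcode a multiset of intervals $(I_\alpha)$ of $T$ if it is isomorphic to $\bigoplus_\alpha C(I_\alpha)$, where $C(I)$ is $\mathbb{F}$ on $I$ and $0$ elsewhere, with identity maps within $I$ and zero otherwise. Homology is taken in all degrees together. *)

(* Defs.v *)
From mathcomp Require Import all_boot all_order all_algebra.
Set Implicit Arguments. Unset Strict Implicit. Unset Printing Implicit Defensive.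
Import GRing.Theory.
Local Open Scope ring_scope.

Definition simplex (m : nat) := {set 'I_m}.

Definition is_complex (m : nat) (S : {set simplex m}) : Prop :=
  forall s, s \in S -> s != set0 /\
    (forall s' : simplex m, s' \subset s -> s' != set0 -> s' \in S).

(* Coefficient of [tau] in the boundary of [sigma].  The orientation of a
   simplex is the one induced by the vertex order of 'I_m, flipped when
   [eps] says so; [eps] is an arbitrary (fixed) choice of orientations. *)
Definition bdcoef (F : fieldType) (m : nat) (eps : simplex m -> bool)
  (tau sigma : simplex m) : F :=
  if (tau \subset sigma) && (#|sigma| == #|tau|.+1) then
    match [pick v in sigma :\: tau] with
    | Some v => (-1) ^+ (#|[set u in sigma | (u < v)%N]| + eps sigma + eps tau)
    | None => 0
    end
  else 0.

Definition entry (m N : nat) (X : nat -> {set simplex m}) (s : simplex m) : nat :=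
  find (fun t => s \in X t) (iota 0 N.+1).

Definition piv (F : fieldType) (n : nat) (X : 'M[F]_n) (j : 'I_n) : option 'I_n :=
  [pick i | (X i j != 0) && [forall i' : 'I_n, (X i' j != 0) ==> (i' <= i)%N]].

Definition pivs (F : fieldType) (n : nat) (X : 'M[F]_n) : {set 'I_n} :=
  [set i | [exists j, piv X j == Some i]].

Definition reduced (F : fieldType) (n : nat) (X : 'M[F]_n) : Prop :=
  forall j1 j2 : 'I_n, j1 != j2 -> piv X j1 != None -> piv X j1 != piv X j2.

Definition upper_triangular (F : fieldType) (n : nat) (X : 'M[F]_n) : Prop :=
  forall i j : 'I_n, (j < i)%N -> X i j = 0.

Definition pivsimp (F : fieldType) (m n : nat) (rowsimp : 'I_n -> simplex m)
  (X : 'M[F]_n) (j : 'I_n) : simplex m :=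
  match piv X j with Some i => rowsimp i | None => set0 end.

(* Chains of K are row vectors in F^n, coordinate i being the coefficient of
   the simplex [e i] (e : an enumeration of the simplices of K). *)
Definition bdmx (F : fieldType) (m n : nat) (eps : simplex m -> bool)
  (e : 'I_n -> simplex m) : 'M[F]_n :=
  \matrix_(i, j) bdcoef F eps (e j) (e i).   (* row i = boundary of e i *)

(* row space = chains supported on the set of simplices S *)
Definition suppmx (F : fieldType) (m n : nat) (e : 'I_n -> simplex m)
  (S : {set simplex m}) : 'M[F]_n :=
  \matrix_(i, j) ((i == j) && (e i \in S))%:R.

Definition cyclesmx (F : fieldType) (m n : nat) (eps : simplex m -> bool)
  (e : 'I_n -> simplex m) (S : {set simplex m}) : 'M[F]_n :=
  (suppmx F e S :&: kermx (bdmx F eps e))%MS.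

Definition boundsmx (F : fieldType) (m n : nat) (eps : simplex m -> bool)
  (e : 'I_n -> simplex m) (S : {set simplex m}) : 'M[F]_n :=
  (suppmx F e S *m bdmx F eps e)%MS.

(* A "subquotient" persistence module indexed by T = {0..N} in ambient space
   F^p: M_t = (row space of U t) / (row space of Bd t), with structure maps
   M_s -> M_t (s <= t) induced by the identity of F^p. *)

(* Isomorphism of two such modules: a family of linear maps (matrices) Phi t
   inducing well-defined maps M1_t -> M2_t, natural w.r.t. the structure maps,
   and bijective at each t (the inverse is then automatically natural). *)
Definition sq_iso (F : fieldType) (N p1 p2 : nat)
  (U1 B1 : nat -> 'M[F]_p1) (U2 B2 : nat -> 'M[F]_p2) : Prop :=
  exists Phi : nat -> 'M[F]_(p1, p2),
  forall t, (t <= N)%N ->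
    [/\ (U1 t *m Phi t <= U2 t)%MS,
        (B1 t *m Phi t <= B2 t)%MS,
        (forall s, (s <= t)%N -> (U1 s *m (Phi s - Phi t) <= B2 t)%MS),
        (forall x : 'rV[F]_p1, (x <= U1 t)%MS -> (x *m Phi t <= B2 t)%MS ->
             (x <= B1 t)%MS) &
        (U2 t <= U1 t *m Phi t + B2 t)%MS].

(* An interval of T = {0..N}: (a, Some b) is [a,b) = {t | a <= t < b},
   (a, None) is [a, oo) = {t | a <= t}. *)
Definition interval := (nat * option nat)%type.

(* The direct sum of the interval modules C(I) for I in the multiset [bars],
   as a subquotient module in F^(size bars): the generator e_i is born at
   the left end and killed at the right end of the i-th interval. *)
Definition barsU (F : fieldType) (bars : seq interval) (t : nat)
  : 'M[F]_(size bars) :=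
  \matrix_(i, j) ((i == j) && ((nth (0%N, None) bars i).1 <= t)%N)%:R.

Definition barsB (F : fieldType) (bars : seq interval) (t : nat)
  : 'M[F]_(size bars) :=
  \matrix_(i, j) ((i == j) &&
     (match (nth (0%N, None) bars i).2 with Some b => (b <= t)%N | None => false end))%:R.

Definition has_barcode (F : fieldType) (N p : nat) (U Bd : nat -> 'M[F]_p)
  (bars : seq interval) : Prop :=
  sq_iso N (barsU F bars) (barsB F bars) U Bd.

(* Main.v *)
Require Import Defs.
From mathcomp Require Import all_boot all_order all_algebra ring fingroup perm.
Set Implicit Arguments. Unset Strict Implicit. Unset Printing Implicit Defensive.
Import GRing.Theory.
Local Open Scope ring_scope.

Section Msk.
Variable F : fieldType.

Definition msk n (P : 'I_n -> bool) : 'M[F]_n := \matrix_(i, j) ((i == j) && P i)%:R.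

Lemma mskE n (P : 'I_n -> bool) i j : msk P i j = ((i == j) && P i)%:R.
Proof. by rewrite mxE. Qed.

Lemma mulmx_msk p n (X : 'M[F]_(p, n)) P r k : (X *m msk P) r k = if P k then X r k else 0.
Proof.
rewrite mxE (bigD1 k) //= mskE eqxx /= big1 ?addr0.
  by case: (P k); rewrite ?mulr1 ?mulr0.
by move=> i /negPf ik; rewrite mskE ik mulr0.
Qed.

Lemma msk_mulmx p n (X : 'M[F]_(n, p)) P r k : (msk P *m X) r k = if P r then X r k else 0.
Proof.
rewrite mxE (bigD1 r) //= mskE eqxx /= big1 ?addr0.
  by case: (P r); rewrite ?mul1r ?mul0r.
by move=> i /negPf ik; rewrite mskE eq_sym ik mul0r.
Qed.

Lemma sub_mskP p n (X : 'M[F]_(p, n)) P :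
  reflect (forall r k, ~~ P k -> X r k = 0) (X <= msk P)%MS.
Proof.
apply: (iffP idP).
  case/submxP=> Y -> r k nPk; rewrite mulmx_msk; by rewrite (negPf nPk).
move=> H; have -> : X = X *m msk P.
  by apply/matrixP=> r k; rewrite mulmx_msk; case: ifP => // /negbT /H ->.
exact: submxMl.
Qed.

Lemma row_msk_mul n p (M : 'M[F]_(n, p)) P b :
  row b (msk P *m M) = if P b then row b M else 0.
Proof.
apply/rowP=> k; rewrite mxE msk_mulmx; case: (P b); by rewrite !mxE.
Qed.

Lemma msk_ext n (P Q : 'I_n -> bool) : P =1 Q -> msk P = msk Q.
Proof. by move=> PQ; apply/matrixP=> i j; rewrite !mskE PQ. Qed.

Lemma msk_le n (P Q : 'I_n -> bool) : (forall i, P i -> Q i) -> (msk P <= msk Q)%MS.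
Proof.
move=> PQ; apply/sub_mskP=> r k nQ; rewrite mskE.
case: eqP => //= ->; case Pk: (P k) => //; by rewrite PQ in nQ.
Qed.

Lemma msk_tr n (P : 'I_n -> bool) : (msk P)^T = msk P.
Proof.
apply/matrixP=> i j; rewrite !mxE eq_sym; case: eqP => // ->; by [].
Qed.

Lemma msk_cap n (P Q : 'I_n -> bool) :
  (msk P :&: msk Q <= msk (fun i => P i && Q i))%MS.
Proof.
apply/sub_mskP=> r k; rewrite negb_and => /orP[] nk.
  by move: (capmxSl (msk P) (msk Q)) => /sub_mskP ->.
by move: (capmxSr (msk P) (msk Q)) => /sub_mskP ->.
Qed.

Lemma rank_msk_or n (P Q : 'I_n -> bool) : (forall i, P i -> Q i -> False) ->
  \rank (msk (fun i => P i || Q i)) = (\rank (msk P) + \rank (msk Q))%N.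
Proof.
move=> dPQ.
have E : (msk (fun i => P i || Q i) :=: msk P + msk Q)%MS.
  apply/eqmxP/andP; split.
    have -> : msk (fun i => P i || Q i) = msk P + msk Q.
      apply/matrixP=> i j; rewrite !mxE; case: eqP => /= _; last by rewrite addr0.
      case Pi: (P i); case Qi: (Q i); rewrite /= ?addr0 ?add0r //; by case: (dPQ i).
    exact: addmx_sub_adds (submx_refl _) (submx_refl _).
  by rewrite addsmx_sub; apply/andP; split; apply: msk_le => i ->; rewrite ?orbT.
rewrite E mxrank_disjoint_sum //.
apply/eqP; rewrite -submx0; apply: (submx_trans (msk_cap P Q)).
rewrite submx0; apply/eqP/matrixP=> r k; rewrite mskE mxE; case: eqP => //= _.
case Pr: (P r); case Qr: (Q r) => //=; by case: (dPQ r).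
Qed.

Lemma rank_msk1 n (i0 : 'I_n) : \rank (msk (fun i => i == i0)) = 1%N.
Proof.
have -> : msk (fun i => i == i0) = delta_mx i0 i0.
  apply/matrixP=> i j; rewrite !mxE; case: (i =P j) => [->|ij] /=; first by rewrite andbb.
  case: (i =P i0) => [ii0|] //=; case: (j =P i0) => [ji0|] //=; by case: ij; rewrite ii0 ji0.
exact: mxrank_delta.
Qed.

Definition upclosed n (P : 'I_n -> bool) := forall i j : 'I_n, (i <= j)%N -> P i -> P j.
Definition downclosed n (P : 'I_n -> bool) := forall i j : 'I_n, (j <= i)%N -> P i -> P j.

Lemma upper_stab n (M : 'M[F]_n) P : upper_triangular M -> upclosed P ->
  (msk P *m M <= msk P)%MS.
Proof.
move=> uM uP; apply/sub_mskP=> r k nPk; rewrite msk_mulmx.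
case Pr: (P r) => //; apply: uM; rewrite ltnNge; apply/negP=> rk.
by move: (uP _ _ rk Pr); rewrite (negPf nPk).
Qed.

Lemma upper_diag_nz n (M : 'M[F]_n) i : upper_triangular M -> M \in unitmx -> M i i != 0.
Proof.
move=> uM; rewrite unitmxE unitfE -det_tr det_trig.
  by rewrite (bigD1 i) //= mulf_eq0 negb_or mxE => /andP[].
apply/forallP=> a; apply/forallP=> b; apply/implyP=> ab; rewrite mxE; apply/eqP.
exact: uM.
Qed.

Lemma upper_inv n (M : 'M[F]_n) : upper_triangular M -> M \in unitmx ->
  upper_triangular (invmx M).
Proof.
move=> uM Mu r k kr.
pose P := fun i : 'I_n => (r <= i)%N.
have uP : upclosed P by move=> i j ij; rewrite /P => /leq_trans; apply.
have E : (msk P *m M == msk P)%MS.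
  rewrite -(mxrank_leqif_eq (upper_stab uM uP)) mxrankMfree //.
  by rewrite row_free_unit.
have : (row r (msk P) *m invmx M <= msk P)%MS.
  rewrite -row_mul (submx_trans (row_sub _ _)) //.
  move/eqmxP: E => E; rewrite -{2}(mulmxK Mu (msk P)).
  by rewrite submxMr // E.
move/sub_mskP=> /(_ 0 k); rewrite /P -ltnNge => /(_ kr) <-.
by rewrite -row_mul mxE msk_mulmx /P leqnn.
Qed.

Lemma stab_eq n (M : 'M[F]_n) P : upper_triangular M -> M \in unitmx -> upclosed P ->
  (msk P *m M :=: msk P)%MS.
Proof.
move=> uM Mu uP; apply/eqmxP/andP; split; first exact: upper_stab.
rewrite -{1}(mulmxKV Mu (msk P)) submxMr //.
by apply: upper_stab => //; apply: upper_inv.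
Qed.

Lemma stab_le n p (M : 'M[F]_n) P (X : 'M[F]_(p, n)) : upper_triangular M -> upclosed P ->
  (X <= msk P)%MS -> (X *m M <= msk P)%MS.
Proof.
by move=> uM uP XP; apply: submx_trans (upper_stab uM uP); apply: submxMr.
Qed.

End Msk.

Section Piv.
Variable F : fieldType.

Lemma pivSome n (X : 'M[F]_n) j i : piv X j = Some i ->
  X i j != 0 /\ (forall i', X i' j != 0 -> (i' <= i)%N).
Proof.
rewrite /piv; case: pickP => // i0 /andP[nz /forallP H] [<-]; split => // i' nz'.
by move: (H i'); rewrite nz'.
Qed.

Lemma pivNone n (X : 'M[F]_n) j : piv X j = None <-> (forall i, X i j = 0).
Proof.
split.
  rewrite /piv; case: pickP => // H _ i; apply/eqP; apply/negPn/negP=> nz.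
  have [i1 nz1 mx] : {i1 | X i1 j != 0 & forall i', X i' j != 0 -> (i' <= i1)%N}.
    case: (@arg_maxnP _ i (fun i => X i j != 0) (fun i : 'I_n => nat_of_ord i) nz) => i1 ? ?; by exists i1.
  move: (H i1); rewrite nz1 /=; move/negP; apply; apply/forallP=> i'; apply/implyP; exact: mx.
move=> H; rewrite /piv; case: pickP => // i /andP[]; by rewrite H eqxx.
Qed.

Lemma col0P n (X : 'M[F]_n) j : reflect (forall i, X i j = 0) (col j X == 0).
Proof.
apply: (iffP eqP) => [H i | H]; first by move/matrixP: H => /(_ i 0); rewrite !mxE.
by apply/matrixP=> i k; rewrite !mxE H.
Qed.

Lemma piv_col0 n (X : 'M[F]_n) j : (piv X j == None) = (col j X == 0).
Proof.
apply/eqP/col0P; by move/pivNone.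
Qed.

Lemma red_uniq n (X : 'M[F]_n) j1 j2 p : reduced X -> piv X j1 = Some p -> piv X j2 = Some p -> j1 = j2.
Proof.
move=> red h1 h2; apply/eqP; apply/negPn/negP=> ne.
by move: (red _ _ ne); rewrite h1 h2 eqxx => /(_ isT).
Qed.

Definition Pi n (X : 'M[F]_n) : 'M[F]_n :=
  \matrix_(p, j) (if piv X j == Some p then X p j else 0).

Lemma Pi_nz n (X : 'M[F]_n) p j : (Pi X p j != 0) = (piv X j == Some p).
Proof.
rewrite mxE; case: (piv X j =P Some p) => [/pivSome [nz _]|_]; [by rewrite nz | by rewrite eqxx].
Qed.

Definition Gm n (X : 'M[F]_n) : 'M[F]_n :=
  \matrix_(a, b) (if [pick j | piv X j == Some b] is Some j then X a j / X b j
                  else (a == b)%:R).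

Lemma G_upper n (X : 'M[F]_n) : upper_triangular (Gm X).
Proof.
move=> a b ba; rewrite mxE; case: pickP => [j /eqP /pivSome [_ H]|_].
  case: (X a j =P 0) => [->|/eqP nz]; first by rewrite mul0r.
  by move: (H _ nz); rewrite leqNgt ba.
by case: eqP => // ab; move: ba; rewrite ab ltnn.
Qed.

Lemma G_diag n (X : 'M[F]_n) b : Gm X b b = 1.
Proof.
rewrite mxE; case: pickP => [j /eqP /pivSome [nz _]|_]; first by rewrite divff.
by rewrite eqxx.
Qed.

Lemma upper_unit n (M : 'M[F]_n) : upper_triangular M -> (forall i, M i i != 0) -> M \in unitmx.
Proof.
move=> uM dM; rewrite unitmxE unitfE -det_tr det_trig.
  by rewrite prodf_seq_neq0; apply/allP=> i _ /=; rewrite mxE.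
apply/forallP=> a; apply/forallP=> b; apply/implyP=> ab; rewrite mxE; apply/eqP.
exact: uM.
Qed.

Lemma G_unit n (X : 'M[F]_n) : Gm X \in unitmx.
Proof. by apply: upper_unit; [apply: G_upper | move=> i; rewrite G_diag oner_neq0]. Qed.

Lemma GPi n (X : 'M[F]_n) : reduced X -> Gm X *m Pi X = X.
Proof.
move=> red; apply/matrixP=> a j; rewrite mxE.
case E: (piv X j) => [p|].
  rewrite (bigD1 p) //= big1 ?addr0.
    rewrite [Pi X p j]mxE E eqxx [Gm X a p]mxE.
    case: pickP => [j' /eqP E'|/(_ j)]; last by rewrite E eqxx.
    have -> := red_uniq red E' E.
    by case/pivSome: E => nz _; rewrite divfK.
  move=> b nb; rewrite [Pi X b j]mxE E; case: eqP => [[]|]; last by rewrite mulr0.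
  by move=> eb; move: nb; rewrite eb eqxx.
move/pivNone: E => E; rewrite E big1 // => b _; rewrite [Pi X b j]mxE E; case: ifP; by rewrite mulr0.
Qed.

Lemma msk_pp n (M : 'M[F]_n) (P : 'I_n -> bool) (phi : 'I_n -> option 'I_n) :
  (forall r c, (M r c != 0) = (phi r == Some c)) ->
  (msk F P *m M :=: msk F (fun c => [exists r, P r && (phi r == Some c)]))%MS.
Proof.
move=> HM; apply/eqmxP/andP; split.
  apply/sub_mskP=> r c nimg; rewrite msk_mulmx; case Pr: (P r) => //.
  apply/eqP; apply/negPn/negP; rewrite HM => Ephi.
  by move: nimg; apply/negP/negPn/existsP; exists r; rewrite Pr.
apply/row_subP=> c.
have -> : row c (msk F (fun c => [exists r, P r && (phi r == Some c)])) =
  row c (msk F (fun c => [exists r, P r && (phi r == Some c)]) *m 1%:M) by rewrite mulmx1.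
rewrite row_msk_mul; case: ifP => [/existsP [r /andP[Pr Er]]|_]; last exact: sub0mx.
have nz : M r c != 0 by rewrite HM.
have -> : row c (1%:M : 'M[F]_n) = (M r c)^-1 *: row r (msk F P *m M).
  apply/rowP=> k; rewrite row_msk_mul Pr !mxE; case: (c =P k) => [<-|ck] /=.
    by rewrite mulVf.
  case: (M r k =P 0) => [->|/eqP]; first by rewrite mulr0.
  by rewrite HM (eqP Er) => /eqP [].
by rewrite scalemx_sub // row_sub.
Qed.

End Piv.

Section Bd.
Variables (F : fieldType) (m : nat) (eps : simplex m -> bool).

Lemma bdcoef_nz (t s : simplex m) : bdcoef F eps t s != 0 -> (t \subset s) /\ #|s| = #|t|.+1.
Proof. rewrite /bdcoef; case: ifP => [/andP[-> /eqP ->] //|]; by rewrite eqxx. Qed.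

Lemma bdcoef_face (t s : simplex m) v : v \in s -> t = s :\ v ->
  bdcoef F eps t s = (-1) ^+ (#|[set u in s | (u < v)%N]| + eps s + eps t).
Proof.
move=> vs ->; rewrite /bdcoef subsetDl (cardsD1 v s) vs add1n eqxx /=.
have -> : s :\: (s :\ v) = [set v].
  apply/setP=> x; rewrite !inE; case: (x =P v) => [->|/eqP/negPf nxv]; rewrite ?eqxx ?nxv /= ?vs //.
  by case: (x \in s).
case: pickP => [x|/(_ v)]; last by rewrite inE eqxx.
by rewrite inE => /eqP ->.
Qed.

Lemma cnt_rem (s : simplex m) v w : v \in s -> (v < w)%N ->
  #|[set u in s :\ v | (u < w)%N]| = (#|[set u in s | (u < w)%N]|).-1.
Proof.
move=> vs vw; rewrite [in RHS](cardsD1 v) inE vs vw add1n /=.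
apply: eq_card => x; rewrite !inE; by case: (x == v).
Qed.

Lemma cnt_rem2 (s : simplex m) (v w : 'I_m) : (v < w)%N ->
  #|[set u in s :\ w | (u < v)%N]| = #|[set u in s | (u < v)%N]|.
Proof.
move=> vw; apply: eq_card => x; rewrite !inE.
case: (x =P w) => [->|] //=; by rewrite ltnNge ltnW // andbF.
Qed.

Lemma bd_sq n (e : 'I_n -> simplex m) (K : {set simplex m}) :
  injective e -> (forall i, e i \in K) -> (forall s, s \in K -> exists i, e i = s) ->
  is_complex K -> bdmx F eps e *m bdmx F eps e = 0.
Proof.
move=> einj eK eon hK; apply/matrixP=> i k; rewrite !mxE.
under eq_bigr do rewrite !mxE.
set s := e i; set u := e k.
case H: ((u \subset s) && (#|s| == #|u|.+2)); last first.
  apply: big1 => j _.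
  case: (bdcoef F eps (e j) s =P 0) => [->|/eqP /bdcoef_nz [h1 h2]]; first by rewrite mul0r.
  case: (bdcoef F eps u (e j) =P 0) => [->|/eqP /bdcoef_nz [h3 h4]]; first by rewrite mulr0.
  by move: H; rewrite (subset_trans h3 h1) h2 h4 eqxx.
case/andP: H => us /eqP cs.
have c2 : #|s :\: u| == 2%N by rewrite cardsDS // cs -addn2 addKn.
have [v [w [vw Evw]]] : exists v w : 'I_m, (v < w)%N /\ s :\: u = [set v; w].
  case/cards2P: c2 => x [y [xy E]]; case: (ltngtP x y) => [lt|lt|/val_inj exy].
  - by exists x, y.
  - by exists y, x; rewrite E setUC.
  - by move: xy; rewrite exy eqxx.
have memE x : (x \in s) && (x \notin u) = (x == v) || (x == w).
  by move/setP: Evw => /(_ x); rewrite !inE andbC.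
have vs : v \in s by move: (memE v); rewrite eqxx /= => /andP[].
have ws : w \in s by move: (memE w); rewrite eqxx orbT => /andP[].
have vnw : v != w by apply/eqP=> ev; move: vw; rewrite ev ltnn.
pose t1 := s :\ v; pose t2 := s :\ w.
have Eus : u = s :\: [set v; w] by rewrite -Evw setDDr setDv set0U (setIidPr us).
have Eu1 : u = t1 :\ w.
  rewrite Eus /t1; apply/setP=> x; rewrite !inE; by case: (x == v); case: (x == w).
have Eu2 : u = t2 :\ v.
  rewrite Eus /t2; apply/setP=> x; rewrite !inE; by case: (x == v); case: (x == w).
have t1K : t1 \in K.
  case: (hK s (eK i)) => _ /(_ t1 (subsetDl _ _)); apply; apply/set0Pn; exists w.
  by rewrite !inE eq_sym vnw ws.
have t2K : t2 \in K.
  case: (hK s (eK i)) => _ /(_ t2 (subsetDl _ _)); apply; apply/set0Pn; exists v.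
  by rewrite !inE vnw vs.
have [j1 Ej1] := eon _ t1K; have [j2 Ej2] := eon _ t2K.
have j12 : j2 != j1.
  apply/eqP=> ej; move: Ej1; rewrite -ej Ej2 => /setP /(_ w).
  by rewrite !inE eqxx eq_sym vnw ws.
rewrite (bigD1 j1) // (bigD1 j2) //= big1 ?addr0; last first.
  move=> j /andP[nj1 nj2].
  case: (bdcoef F eps (e j) s =P 0) => [->|/eqP /bdcoef_nz [h1 h2]]; first by rewrite mul0r.
  case: (bdcoef F eps u (e j) =P 0) => [->|/eqP /bdcoef_nz [h3 h4]]; first by rewrite mulr0.
  exfalso.
  have cards_t (x : 'I_m) : x \in s -> #|s :\ x| = #|e j|.
    by move=> xs; move: (cardsD1 x s); rewrite xs h2 add1n => [[]].
  case vj: (v \in e j); last first.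
    have : e j == t1.
      rewrite eqEcard (cards_t v vs) leqnn andbT; apply/subsetP=> x xj; rewrite !inE (subsetP h1) // andbT.
      by apply/eqP=> exv; move: vj; rewrite -exv xj.
    by rewrite -Ej1 => /eqP /einj ej; move: nj1; rewrite ej eqxx.
  case wj: (w \in e j); last first.
    have : e j == t2.
      rewrite eqEcard (cards_t w ws) leqnn andbT; apply/subsetP=> x xj; rewrite !inE (subsetP h1) // andbT.
      by apply/eqP=> exw; move: wj; rewrite -exw xj.
    by rewrite -Ej2 => /eqP /einj ej; move: nj2; rewrite ej eqxx.
  have : s \subset e j.
    apply/subsetP=> x xs; case xu: (x \in u); first exact: (subsetP h3).
    by move: (memE x); rewrite xs xu /= => /esym /orP[] /eqP ->.
  by move/subset_leq_card; rewrite h2 ltnn.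
rewrite Ej1 Ej2.
rewrite (bdcoef_face vs (erefl _)) (bdcoef_face ws (erefl _)).
have wt1 : w \in t1 by rewrite !inE eq_sym vnw ws.
have vt2 : v \in t2 by rewrite !inE vnw vs.
rewrite (bdcoef_face wt1 Eu1) (bdcoef_face vt2 Eu2).
rewrite cnt_rem // cnt_rem2 //.
have : (0 < #|[set x in s | (x < w)%N]|)%N.
  by apply/card_gt0P; exists v; rewrite inE vs vw.
case: #|[set x in s | (x < w)%N]| => // b _ /=.
set a := #|_|.
rewrite !exprD !exprS.
have h1 : (-1) ^+ eps t1 * (-1) ^+ eps t1 = 1 :> F by rewrite -expr2 sqrr_sign.
have h2 : (-1) ^+ eps t2 * (-1) ^+ eps t2 = 1 :> F by rewrite -expr2 sqrr_sign.
transitivity (((-1) ^+ a * (-1) ^+ eps s * (-1) ^+ b * (-1) ^+ eps u *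
   ((-1) ^+ eps t1 * (-1) ^+ eps t1 - (-1) ^+ eps t2 * (-1) ^+ eps t2)) : F); first by ring.
by rewrite h1 h2 subrr mulr0.
Qed.

End Bd.

Section Alg.
Variable F : fieldType.

Lemma mxrank_unitl m n (G : 'M[F]_m) (X : 'M[F]_(m, n)) : G \in unitmx ->
  \rank (G *m X) = \rank X.
Proof.
move=> Gu; apply/eqP; rewrite eqn_leq; apply/andP; split; first exact: mxrankM_maxr.
have -> : X = invmx G *m (G *m X) by rewrite mulKmx.
rewrite [X in (_ <= \rank (_ *m X))%N]mulKmx //; exact: mxrankM_maxr.
Qed.

Lemma down_stab n (M : 'M[F]_n) P : upper_triangular M -> downclosed P ->
  M *m msk F P = msk F P *m M *m msk F P.
Proof.
move=> uM dP; apply/matrixP=> i k; rewrite !mulmx_msk msk_mulmx.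
case Pk: (P k) => //; case Pi: (P i) => //; apply: uM; rewrite ltnNge; apply/negP=> ik.
by move: (dP _ _ ik Pk); rewrite Pi.
Qed.

Lemma sum1 n (f : 'I_n -> F) l : (forall b, b != l -> f b = 0) -> \sum_b f b = f l.
Proof. by move=> H; rewrite (bigD1 l) //= big1 ?addr0. Qed.

Lemma PZ n (A V R : 'M[F]_n) j l : A *m A = 0 -> upper_triangular V -> V \in unitmx ->
  R = A *m V -> reduced R -> piv R j = Some l -> piv R l = None.
Proof.
move=> AA uV Vu RAV red Ej; case El: (piv R l) => [i|] //; exfalso.
pose G := Gm R; pose Pm := Pi R.
have Gu : G \in unitmx := G_unit R.
have E1 : A *m V = G *m Pm by rewrite -RAV GPi.
have EA : A = G *m Pm *m invmx V by rewrite -E1 mulmxK.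
have E0 : Pm *m (invmx V *m G) *m Pm = 0.
  have -> : Pm *m (invmx V *m G) *m Pm = invmx G *m (A *m A) *m V.
    by rewrite EA !mulmxA mulVmx // mul1mx mulmxKV.
  by rewrite AA mulmx0 mul0mx.
have : (Pm *m (invmx V *m G) *m Pm) i j = 0 by rewrite E0 mxE.
rewrite mxE (sum1 (l := l)); last first.
  move=> b nb; rewrite [Pm b j]mxE Ej; case: eqP => [[eb]|]; last by rewrite mulr0.
  by move: nb; rewrite eb eqxx.
rewrite mxE (sum1 (l := l)); last first.
  move=> a na; rewrite [Pm i a]mxE; case: eqP => [Ea|]; last by rewrite mul0r.
  by move: na; rewrite (red_uniq red Ea El) eqxx.
rewrite [(invmx V *m G) l l]mxE (sum1 (l := l)); last first.
  move=> c nc; case: (ltngtP c l) => [cl|lc|/val_inj ecl].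
  - by rewrite (upper_inv uV Vu) ?mul0r.
  - by rewrite (@G_upper _ _ R) ?mulr0.
  - by move: nc; rewrite ecl eqxx.
rewrite G_diag mulr1 ![Pm _ _]mxE El Ej !eqxx.
move/eqP; rewrite !mulf_eq0.
have [nz1 _] := pivSome El; have [nz2 _] := pivSome Ej.
have nz3 := upper_diag_nz l (upper_inv uV Vu) (etrans (unitmx_inv V) Vu).
by rewrite (negPf nz1) (negPf nz2) (negPf nz3).
Qed.

Definition img n (R : 'M[F]_n) (P : 'I_n -> bool) p := [exists k, P k && (piv R k == Some p)].

Lemma rank_prefix n (A V R : 'M[F]_n) P : upper_triangular V -> V \in unitmx ->
  R = A *m V -> reduced R -> downclosed P ->
  \rank (A *m msk F P) = \rank (msk F (img R P)).
Proof.
move=> uV Vu RAV red dP.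
have E1 : \rank (A *m msk F P) = \rank (R *m msk F P).
  apply/eqP; rewrite eqn_leq; apply/andP; split.
    have -> : A *m msk F P = R *m msk F P *m (invmx V *m msk F P).
      by rewrite -mulmxA (mulmxA (msk F P)) -(down_stab (upper_inv uV Vu) dP) mulmxA RAV mulmxK.
    exact: mxrankM_maxl.
  have -> : R *m msk F P = A *m msk F P *m (V *m msk F P).
    rewrite RAV -!mulmxA; congr (A *m _); by rewrite mulmxA -(down_stab uV dP).
  exact: mxrankM_maxl.
rewrite E1 -{1}(GPi red) -mulmxA mxrank_unitl ?G_unit // -mxrank_tr trmx_mul msk_tr.
apply/eqmx_rank/eqmxP; apply: (@msk_pp _ _ _ _ (piv R)) => r c; by rewrite mxE Pi_nz.
Qed.

Lemma rank_step n (A V R : 'M[F]_n) (j : 'I_n) : upper_triangular V -> V \in unitmx ->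
  R = A *m V -> reduced R ->
  \rank (A *m msk F (fun k => (k <= j)%N)) =
  (\rank (A *m msk F (fun k => (k < j)%N)) + (col j R != 0%R))%N.
Proof.
move=> uV Vu RAV red.
rewrite !(rank_prefix uV Vu RAV red); last first.
- by move=> a b ba ab; apply: leq_trans ab.
- by move=> a b ba ab; apply: leq_ltn_trans ab.
have -> : msk F (img R (fun k => (k <= j)%N)) =
          msk F (fun p => img R (fun k => (k < j)%N) p || (piv R j == Some p)).
  apply: msk_ext => p; apply/existsP/orP => [[k /andP[kj Ek]]|[/existsP [k /andP[kj Ek]]|Ej]].
  - rewrite leq_eqVlt in kj; case/orP: kj => [/eqP /val_inj ekj|kj].
      by right; rewrite -ekj.
    by left; apply/existsP; exists k; rewrite kj.
  - by exists k; rewrite ltnW.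
  - by exists j; rewrite leqnn.
rewrite rank_msk_or; last first.
  move=> p /existsP [k /andP[kj /eqP Ek]] /eqP Ej.
  by move: kj; rewrite (red_uniq red Ek Ej) ltnn.
congr (_ + _)%N.
rewrite -piv_col0; case: (piv R j) => [p|] /=.
  rewrite -(rank_msk1 F p); congr (\rank _); apply: msk_ext => q; by rewrite eq_sym.
have -> : msk F (fun p : 'I_n => None == Some p) = 0.
  by apply/matrixP=> a b; rewrite !mxE andbF.
exact: mxrank0.
Qed.

Lemma Zdesc n (A V R : 'M[F]_n) P : upper_triangular V -> V \in unitmx ->
  R = A *m V -> reduced R -> upclosed P ->
  (msk F P :&: kermx A :=: msk F (fun i => P i && (i \notin pivs R)) *m invmx (Gm R))%MS.
Proof.
move=> uV Vu RAV red uP.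
pose G := Gm R; pose Pm := Pi R.
have Gu : G \in unitmx := G_unit R.
have E1 : A *m V = G *m Pm by rewrite -RAV GPi.
have EA : A = G *m Pm *m invmx V by rewrite -E1 mulmxK.
apply/eqmxP/andP; split.
  set Y := (msk F P :&: kermx A)%MS.
  have YP : (Y <= msk F P)%MS := capmxSl _ _.
  have YA : Y *m A = 0 by apply/sub_kermxP; exact: capmxSr.
  rewrite -{1}(mulmxK Gu Y) submxMr //.
  apply/sub_mskP=> r k; rewrite negb_and negbK => /orP[nPk|kp].
    by move/sub_mskP: (stab_le (G_upper R) uP YP) => ->.
  move: kp; rewrite inE => /existsP [j /eqP Ej].
  have : (Y *m G *m Pm) r j = 0.
    by rewrite -mulmxA -E1 mulmxA YA mul0mx mxE.
  rewrite mxE (sum1 (l := k)); last first.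
    move=> b nb; rewrite [Pm b j]mxE Ej; case: eqP => [[eb]|]; last by rewrite mulr0.
    by move: nb; rewrite eb eqxx.
  rewrite [Pm k j]mxE Ej eqxx => /eqP; rewrite mulf_eq0 => /orP[/eqP //|].
  by have [nz _] := pivSome Ej; rewrite (negPf nz).
rewrite sub_capmx; apply/andP; split.
  apply: stab_le; [exact: upper_inv (G_upper R) Gu | exact: uP |].
  by apply: msk_le => i /andP[].
apply/sub_kermxP; rewrite EA !mulmxA mulmxKV //.
suff -> : msk F (fun i => P i && (i \notin pivs R)) *m Pm = 0 by rewrite mul0mx.
apply/matrixP=> r c; rewrite msk_mulmx [RHS]mxE; case: ifP => [/andP[_ nr]|//].
rewrite mxE; case: eqP => // Ec; move: nr; rewrite inE; case/existsP; by exists c; rewrite Ec.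
Qed.

Definition dead n (S : 'M[F]_n) (P : 'I_n -> bool) j :=
  if piv S j is Some p then P p else false.

Lemma Bdesc n (B W S : 'M[F]_n) P : upper_triangular W -> W \in unitmx ->
  S = B *m W -> reduced S -> upclosed P ->
  (msk F P *m B :=: msk F (dead S P) *m invmx W)%MS.
Proof.
move=> uW Wu SBW red uP.
pose H := Gm S; pose Pm := Pi S.
have EB : B = H *m Pm *m invmx W by rewrite (GPi red) SBW mulmxK.
rewrite EB !mulmxA; apply: eqmxMr.
apply: eqmx_trans (eqmxMr _ (stab_eq (G_upper S) (G_unit S) uP)) _.
pose phi p := [pick j | piv S j == Some p].
have Hphi : forall r c, (Pm r c != 0) = (phi r == Some c).
  move=> r c; rewrite Pi_nz /phi; case: pickP => [j /eqP Ej|H0].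
    apply/eqP/eqP => [Ec|[<-] //]; by rewrite (red_uniq red Ej Ec).
  by move: (H0 c) => /= ->.
apply: eqmx_trans (msk_pp _ Hphi) _.
have -> : msk F (fun c => [exists r, P r && (phi r == Some c)]) = msk F (dead S P).
  apply: msk_ext => c; rewrite /dead /phi.
  case Ec: (piv S c) => [p|].
    apply/existsP/idP => [[r /andP[Pr]]|Pp].
      case: pickP => // j /eqP Ej /eqP [ejc]; move: Ej; rewrite ejc Ec => -[->] //.
    exists p; rewrite Pp /=; case: pickP => [j /eqP Ej|/(_ c)]; last by rewrite Ec eqxx.
    by rewrite (red_uniq red Ej Ec).
  apply/existsP => [[r /andP[_]]]; case: pickP => // j /eqP Ej /eqP [ejc].
  by move: Ej; rewrite ejc Ec.
exact: eqmx_refl.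
Qed.

Lemma disj n (G W : 'M[F]_n) (Ess NZ : 'I_n -> bool) (y z : 'rV[F]_n) :
  upper_triangular G -> G \in unitmx -> upper_triangular W -> W \in unitmx ->
  (forall i, Ess i -> ~~ NZ i) ->
  (y <= msk F Ess)%MS -> (z <= msk F NZ)%MS -> y *m invmx G = z *m invmx W -> y = 0.
Proof.
move=> uG Gu uW Wu dEN yE zN Eyz.
apply/rowP=> k0; rewrite mxE; apply/eqP/negPn/negP=> nz0.
have [p0 nzp0 minp0] : {p0 | y 0 p0 != 0 & forall k, y 0 k != 0 -> (p0 <= k)%N}.
  case: (@arg_minnP _ k0 (fun k => y 0 k != 0) (fun k : 'I_n => nat_of_ord k) nz0) => p ? ?.
  by exists p.
have Ep0 : Ess p0.
  apply/negPn/negP => nE; move/sub_mskP: yE => /(_ 0 p0 nE) yp0.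
  by move: nzp0; rewrite yp0 eqxx.
pose Pge := fun k : 'I_n => (p0 <= k)%N.
pose Pgt := fun k : 'I_n => (p0 < k)%N.
have uge : upclosed Pge by move=> a b ab; rewrite /Pge => /leq_trans; apply.
have ugt : upclosed Pgt by move=> a b ab; rewrite /Pgt => /leq_trans; apply.
have yge : (y <= msk F Pge)%MS.
  apply/sub_mskP=> r k; rewrite /Pge -ltnNge => kp; rewrite (ord1 r).
  apply/eqP/negPn/negP => /minp0; by rewrite leqNgt kp.
have vge := stab_le (upper_inv uG Gu) uge yge.
have zge : (z <= msk F Pge)%MS by rewrite -(mulmxKV Wu z) -Eyz; exact: stab_le uW uge vge.
have zgt : (z <= msk F Pgt)%MS.
  apply/sub_mskP=> r k; rewrite /Pgt -leqNgt leq_eqVlt => /orP[/eqP /val_inj ek|kp].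
    by move/sub_mskP: zN => -> //; rewrite ek; apply: dEN.
  by move/sub_mskP: zge => -> //; rewrite /Pge -ltnNge.
have vgt := stab_le (upper_inv uW Wu) ugt zgt.
have ygt : (y <= msk F Pgt)%MS by rewrite -(mulmxKV Gu y) Eyz; exact: stab_le uG ugt vgt.
move/sub_mskP: ygt => /(_ 0 p0); rewrite /Pgt ltnn => /(_ isT) y0.
by move: nzp0; rewrite y0 eqxx.
Qed.

End Alg.

Definition deadb (t : nat) (I : nat * option nat) := if I.2 is Some b then (b <= t)%N else false.

Section Barcode.
Variable F : fieldType.

Lemma barsU_msk bars t :
  barsU F bars t = msk F (fun b : 'I_(size bars) => ((nth (0%N, None) bars b).1 <= t)%N).
Proof. by apply/matrixP=> i j; rewrite !mxE. Qed.

Lemma barsB_msk bars t :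
  barsB F bars t = msk F (fun b : 'I_(size bars) => deadb t (nth (0%N, None) bars b)).
Proof. by apply/matrixP=> i j; rewrite !mxE. Qed.

Lemma barcode_reps (N n : nat) (U2 B2 : nat -> 'M[F]_n) (X : eqType) (idx : seq X)
  (bar : X -> nat * option nat) (rep : X -> 'rV[F]_n) :
  uniq idx ->
  (forall t, (t <= N)%N ->
    [/\ forall x, x \in idx -> ((bar x).1 <= t)%N -> (rep x <= U2 t)%MS,
        forall x, x \in idx -> deadb t (bar x) -> (rep x <= B2 t)%MS,
        (U2 t <= (\sum_(x <- idx | ((bar x).1 <= t)%N) <<rep x>>) + B2 t)%MS &
        forall c : X -> F,
          (forall x, x \in idx -> c x != 0 -> ((bar x).1 <= t)%N && ~~ deadb t (bar x)) ->
          ((\sum_(x <- idx) c x *: rep x)%R <= B2 t)%MS -> forall x, x \in idx -> c x = 0]) ->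
  has_barcode N U2 B2 (map bar idx).
Proof.
move=> uidx H; rewrite /has_barcode /sq_iso.
case E: idx => [|x0 idx'].
  exists (fun _ => 0) => t tN; have [_ _ H3 _] := H t tN.
  rewrite E big_nil in H3.
  split.
  - by rewrite mulmx0 sub0mx.
  - by rewrite mulmx0 sub0mx.
  - by move=> s _; rewrite subrr mulmx0; apply: sub0mx.
  - by move=> x _ _; rewrite thinmx0 sub0mx.
  - by rewrite mulmx0 adds0mx; rewrite adds0mx in H3.
rewrite -E.
have sz : size (map bar idx) = size idx by rewrite size_map.
pose p := size (map bar idx).
pose xb (b : 'I_p) := nth x0 idx b.
have ltb (b : 'I_p) : (b < size idx)%N by rewrite -sz.
have barb (b : 'I_p) : nth (0%N, None) (map bar idx) b = bar (xb b) by rewrite (nth_map x0).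
pose Phi : 'M[F]_(p, n) := \matrix_(b < p, k < n) (nth 0 (map rep idx) b) 0 k.
have rowPhi (b : 'I_p) : row b Phi = rep (xb b).
  by apply/rowP=> k; rewrite !mxE (nth_map x0).
have xbin (b : 'I_p) : xb b \in idx by rewrite mem_nth.
exists (fun _ => Phi) => t tN; have [H1 H2 H3 H4] := H t tN.
rewrite barsU_msk barsB_msk.
split.
- apply/row_subP=> b; rewrite row_msk_mul; case: ifP => [born|_]; last exact: sub0mx.
  by rewrite rowPhi; apply: H1; rewrite // -barb.
- apply/row_subP=> b; rewrite row_msk_mul; case: ifP => [dd|_]; last exact: sub0mx.
  by rewrite rowPhi; apply: H2; rewrite // -barb.
- by move=> s _; rewrite subrr mulmx0 sub0mx.
- move=> x xU xB.
  pose xa : 'rV[F]_p := \row_b (if deadb t (bar (xb b)) then 0 else x 0 b).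
  pose xd : 'rV[F]_p := \row_b (if deadb t (bar (xb b)) then x 0 b else 0).
  have Ex : x = xa + xd by apply/rowP=> b; rewrite !mxE; case: ifP; rewrite ?addr0 ?add0r.
  have xdB : (xd *m Phi <= B2 t)%MS.
    rewrite mulmx_sum_row; apply: summx_sub => b _; rewrite rowPhi mxE.
    case: ifP => dd; last by rewrite scale0r sub0mx.
    by apply: scalemx_sub; apply: H2.
  have xaB : (xa *m Phi <= B2 t)%MS.
    have -> : xa *m Phi = x *m Phi + - (xd *m Phi) by rewrite {1}Ex mulmxDl addrK.
    by apply: addmx_sub => //; rewrite eqmx_opp.
  pose c (y : X) := \sum_(b < p | xb b == y) xa 0 b.
  have cE (b : 'I_p) : c (xb b) = xa 0 b.
    rewrite /c (bigD1 b) //= big1 ?addr0 // => b' /andP[/eqP e nb].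
    have : nat_of_ord b' == nat_of_ord b by rewrite -(nth_uniq x0 (ltb b') (ltb b) uidx); apply/eqP; exact: e.
    by move/eqP/val_inj => eb; move: nb; rewrite eb eqxx.
  have csum : \sum_(y <- idx) c y *: rep y = xa *m Phi.
    rewrite (big_nth x0) big_mkord mulmx_sum_row -sz.
    by apply: eq_bigr => b _; rewrite rowPhi -cE.
  have c0 := H4 c.
  have idxb y : y \in idx -> exists b : 'I_p, xb b = y.
    move=> yin; have lt : (index y idx < p)%N by rewrite /p sz index_mem.
    by exists (Ordinal lt); rewrite /xb /= nth_index.
  have {}c0 : forall y, y \in idx -> c y = 0.
    apply: c0; last by rewrite csum.
    move=> y yin; have [b <-] := idxb y yin; rewrite cE mxE.
    case: ifP => [_|nd]; first by rewrite eqxx.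
    move=> nz; rewrite andbT.
    apply/negPn/negP => nb; move/sub_mskP: xU => /(_ 0 b); rewrite barb => /(_ nb) x0b.
    by move: nz; rewrite x0b eqxx.
  apply/sub_mskP=> r k; rewrite (ord1 r) barb => nd.
  have := c0 _ (xbin k); rewrite cE mxE (negPf nd) => <-; by [].
- apply: submx_trans H3 _; apply: addsmxS => //.
  rewrite big_seq_cond; elim/big_ind: _ => [|A B hA hB|y /andP[yin born]].
  + exact: sub0mx.
  + by rewrite addsmx_sub hA hB.
  have lt : (index y idx < p)%N by rewrite /p sz index_mem.
  rewrite genmxE; have -> : rep y = row (Ordinal lt) (msk F (fun b : 'I_p =>
        ((nth (0%N, None) (map bar idx) b).1 <= t)%N) *m Phi).
    by rewrite row_msk_mul barb /xb /= nth_index // born rowPhi /xb /= nth_index.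
  exact: row_sub.
Qed.

Lemma sq_iso_mulr N p n (U1 B1 : nat -> 'M[F]_p) (U2 B2 U2' B2' : nat -> 'M[F]_n)
  (J : 'M[F]_n) : J \in unitmx ->
  (forall t, (U2' t :=: U2 t *m J)%MS) -> (forall t, (B2' t :=: B2 t *m J)%MS) ->
  sq_iso N U1 B1 U2 B2 -> sq_iso N U1 B1 U2' B2'.
Proof.
move=> Ju EU EB [Phi H]; exists (fun t => Phi t *m J) => t tN.
have [h1 h2 h3 h4 h5] := H t tN; split.
- by rewrite EU mulmxA submxMr.
- by rewrite EB mulmxA submxMr.
- by move=> s st; rewrite -mulmxBl EB mulmxA submxMr // h3.
- by move=> x xU; rewrite EB mulmxA submxMfree ?row_free_unit //; apply: h4.
- rewrite EU; apply: (submx_trans (submxMr J h5)); rewrite addsmxMr.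
  by apply: addsmxS; [rewrite mulmxA | rewrite EB].
Qed.

End Barcode.

Lemma filt_mono m N (X : nat -> {set simplex m}) :
  (forall t, (t < N)%N -> X t \subset X t.+1) ->
  forall a b, (a <= b)%N -> (b <= N)%N -> X a \subset X b.
Proof.
move=> H a b ab; elim: b ab => [|b IH]; first by rewrite leqn0 => /eqP -> _.
rewrite leq_eqVlt => /orP[/eqP -> //|ab] bN.
apply: subset_trans (IH ab (ltnW bN)) (H _ bN).
Qed.

Lemma entry_mem m N (X : nat -> {set simplex m}) (x : simplex m) s :
  (forall t, (t < N)%N -> X t \subset X t.+1) -> x \in X N -> (s <= N)%N ->
  (x \in X s) = (entry N X x <= s)%N.
Proof.
move=> mono xN sN; rewrite /entry.
set P := fun t => x \in X t.
have hasP : has P (iota 0 N.+1) by apply/hasP; exists N; [rewrite mem_iota add0n ltnSn | exact: xN].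
have ltf : (find P (iota 0 N.+1) < N.+1)%N by move: hasP; rewrite has_find size_iota.
have Pf := nth_find 0 hasP; rewrite nth_iota // add0n in Pf.
apply/idP/idP => [xs|fs].
  rewrite leqNgt; apply/negP => sf.
  have := before_find 0 sf; rewrite nth_iota ?add0n ?ltnS // => /negbT.
  by rewrite /P xs.
exact: (subsetP (filt_mono mono fs sN)).
Qed.

Lemma piv_diag (F : fieldType) n (M : 'M[F]_n) j : upper_triangular M -> M \in unitmx ->
  piv M j = Some j.
Proof.
move=> uM Mu; have nz := upper_diag_nz j uM Mu.
have below i : M i j != 0 -> (i <= j)%N.
  by move=> nzi; rewrite leqNgt; apply/negP => ji; move: nzi; rewrite uM ?eqxx.
rewrite /piv; case: pickP => [i /andP[nzi /forallP H]|/(_ j)]; last first.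
  by rewrite nz /=; move/negbT/negP; case; apply/forallP=> i'; apply/implyP; exact: below.
congr Some; apply/val_inj/eqP; rewrite eqn_leq below //=.
by move: (H j); rewrite nz.
Qed.

Lemma sumsmx_seq_sup (F : fieldType) n (X : eqType) (s : seq X) (P : pred X)
  (f : X -> 'M[F]_n) x p (Y : 'M[F]_(p, n)) :
  x \in s -> P x -> (Y <= f x)%MS -> (Y <= \sum_(y <- s | P y) f y)%MS.
Proof.
move=> xs Px Yf; rewrite (big_rem x xs) Px; apply: submx_trans Yf _; exact: addsmxSl.
Qed.

Section Main.
Variables (F : fieldType) (N m n : nat) (eps : simplex m -> bool).
Variables (K : {set simplex m}) (Kf Lf : nat -> {set simplex m}).
Hypothesis hK : is_complex K.
Hypotheses (hKN : Kf N = K) (hLN : Lf N = K).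
Hypothesis hKmono : forall t, (t < N)%N -> Kf t \subset Kf t.+1.
Hypothesis hLmono : forall t, (t < N)%N -> Lf t \subset Lf t.+1.
Variables (sigma tau : 'I_n -> simplex m).
Hypotheses (hsig_inj : injective sigma) (hsig_in : forall i, sigma i \in K).
Hypothesis hsig_onto : forall s, s \in K -> exists i, sigma i = s.
Hypothesis hsig_ord : forall i j : 'I_n, (i <= j)%N ->
      (entry N Lf (sigma i) <= entry N Lf (sigma j))%N.
Hypotheses (htau_inj : injective tau) (htau_in : forall i, tau i \in K).
Hypothesis htau_onto : forall s, s \in K -> exists i, tau i = s.
Hypothesis htau_ord : forall i j : 'I_n, (i <= j)%N ->
      (entry N Kf (tau i) <= entry N Kf (tau j))%N.
Variables (A B V W R S : 'M[F]_n).
Hypothesis hA : A = \matrix_(i, j) bdcoef F eps (sigma (rev_ord j)) (sigma (rev_ord i)).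
Hypothesis hB : B = \matrix_(i, j) bdcoef F eps (sigma (rev_ord j)) (tau (rev_ord i)).
Hypotheses (hVu : upper_triangular V) (hVi : V \in unitmx).
Hypotheses (hWu : upper_triangular W) (hWi : W \in unitmx).
Hypotheses (hR : R = A *m V) (hS : S = B *m W).
Hypotheses (hRred : reduced R) (hSred : reduced S).

Definition rA := fun i : 'I_n => sigma (rev_ord i).
Definition rB := fun i : 'I_n => tau (rev_ord i).

Lemma rA_inj : injective rA.
Proof. by move=> i j /hsig_inj /rev_ord_inj. Qed.
Lemma rA_in i : rA i \in K. Proof. exact: hsig_in. Qed.
Lemma rA_onto s : s \in K -> exists i, rA i = s.
Proof. by case/hsig_onto=> i <-; exists (rev_ord i); rewrite /rA rev_ordK. Qed.

Lemma AA : A *m A = 0.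
Proof. rewrite hA; exact (bd_sq F eps rA_inj rA_in rA_onto hK). Qed.

Definition pif (i : 'I_n) : 'I_n := odflt i [pick k | rA k == rB i].
Lemma pifE i : rA (pif i) = rB i.
Proof.
rewrite /pif; case: pickP => [k /eqP //|H].
have [k Ek] := rA_onto (htau_in (rev_ord i)).
by move: (H k); rewrite Ek eqxx.
Qed.
Lemma pif_inj : injective pif.
Proof.
by move=> i j E; have := pifE i; rewrite E pifE /rB => /htau_inj /rev_ord_inj ->.
Qed.
Definition pip : 'S_n := perm pif_inj.

Lemma BQA : B = perm_mx pip *m A.
Proof.
rewrite -row_permE hA hB; apply/matrixP=> i j; rewrite !mxE permE.
by have := pifE i; rewrite /rA /rB => ->.
Qed.

Lemma NZeq j : (col j S != 0) = (col j R != 0).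
Proof.
have h1 := rank_step j hVu hVi hR hRred.
have h2 := rank_step j hWu hWi hS hSred.
rewrite BQA -!mulmxA !(mxrank_unitl _ (unitmx_perm _ pip)) in h2.
move: h1; rewrite h2 => /eqP; rewrite eqn_add2l => /eqP.
by case: (col j S != 0); case: (col j R != 0).
Qed.

Definition Gr := Gm R.
Definition Ginv := invmx Gr.
Definition Winv := invmx W.
Definition Lt t := fun i : 'I_n => rA i \in Lf t.
Definition Kt t := fun i : 'I_n => rB i \in Kf t.
Definition cyc t := cyclesmx F eps rA (Lf t).
Definition bnd t := boundsmx F eps rA (Kf t).

Lemma Aeq : A = bdmx F eps rA. Proof. by rewrite hA. Qed.
Lemma supp_msk (e : 'I_n -> simplex m) (X : {set simplex m}) :
  suppmx F e X = msk F (fun i => e i \in X).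
Proof. by []. Qed.

Lemma Ginv_unit : Ginv \in unitmx. Proof. by rewrite unitmx_inv G_unit. Qed.
Lemma Winv_unit : Winv \in unitmx. Proof. by rewrite unitmx_inv. Qed.
Lemma Ginv_upper : upper_triangular Ginv. Proof. exact: upper_inv (G_upper R) (G_unit R). Qed.
Lemma Winv_upper : upper_triangular Winv. Proof. exact: upper_inv hWu hWi. Qed.

Lemma rB_in i : rB i \in K. Proof. exact: htau_in. Qed.

Lemma mem_L t x : (t <= N)%N -> x \in K -> (x \in Lf t) = (entry N Lf x <= t)%N.
Proof. by move=> tN xK; apply: entry_mem => //; rewrite hLN. Qed.
Lemma mem_K t x : (t <= N)%N -> x \in K -> (x \in Kf t) = (entry N Kf x <= t)%N.
Proof. by move=> tN xK; apply: entry_mem => //; rewrite hKN. Qed.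

Lemma rev_le (i j : 'I_n) : (i <= j)%N -> (rev_ord j <= rev_ord i)%N.
Proof. by move=> ij; rewrite /= leq_sub2l. Qed.

Lemma Lt_up t : (t <= N)%N -> upclosed (Lt t).
Proof.
move=> tN i j ij; rewrite /Lt !mem_L ?rA_in // => H; apply: leq_trans H.
exact: hsig_ord (rev_le ij).
Qed.
Lemma Kt_up t : (t <= N)%N -> upclosed (Kt t).
Proof.
move=> tN i j ij; rewrite /Kt !mem_K ?rB_in // => H; apply: leq_trans H.
exact: htau_ord (rev_le ij).
Qed.

Lemma F1 t : (t <= N)%N ->
  (cyc t :=: msk F (fun i => Lt t i && (i \notin pivs R)) *m Ginv)%MS.
Proof.
move=> tN; rewrite /cyc /cyclesmx supp_msk -Aeq.
exact: (Zdesc hVu hVi hR hRred (Lt_up tN)).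
Qed.

Lemma mskQ t : msk F (Kt t) *m perm_mx pip = perm_mx pip *m msk F (fun i => rA i \in Kf t).
Proof.
apply/matrixP=> i c; rewrite msk_mulmx mulmx_msk !mxE permE.
case: (pif i =P c) => [<-|_]; first by rewrite pifE.
by case: ifP; case: ifP.
Qed.

Lemma F2 t : (t <= N)%N -> (bnd t :=: msk F (dead S (Kt t)) *m Winv)%MS.
Proof.
move=> tN; rewrite /bnd /boundsmx supp_msk -Aeq.
apply: eqmx_trans (Bdesc hWu hWi hS hSred (Kt_up tN)).
rewrite BQA mulmxA mskQ -mulmxA; apply: eqmx_sym; apply: eqmxMfull.
by rewrite row_full_unit unitmx_perm.
Qed.

Lemma NZdead P j : dead S P j -> col j S != 0.
Proof. rewrite /dead -piv_col0; by case: (piv S j). Qed.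

Lemma pivsimpW j : pivsimp rA W j = rA j.
Proof. by rewrite /pivsimp piv_diag. Qed.
Lemma pivsimpV j : pivsimp rA V j = rA j.
Proof. by rewrite /pivsimp piv_diag. Qed.

Lemma bornE (M : 'M[F]_n) t j : upper_triangular M -> M \in unitmx -> (t <= N)%N ->
  (entry N Lf (pivsimp rA M j) <= t)%N = Lt t j.
Proof. by move=> uM Mu tN; rewrite /pivsimp piv_diag // /Lt mem_L ?rA_in. Qed.

Lemma deadE t j : (t <= N)%N -> col j S != 0 ->
  (entry N Kf (pivsimp rB S j) <= t)%N = dead S (Kt t) j.
Proof.
move=> tN; rewrite -piv_col0 /pivsimp /dead; case: (piv S j) => // p _.
by rewrite /Kt mem_K ?rB_in.
Qed.

Lemma rowW_bnd t j : (t <= N)%N -> dead S (Kt t) j -> (row j Winv <= bnd t)%MS.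
Proof.
move=> tN dj; rewrite (F2 tN).
have -> : row j Winv = row j (msk F (dead S (Kt t)) *m Winv) by rewrite row_msk_mul dj.
exact: row_sub.
Qed.

Lemma rowW_cyc t j : (t <= N)%N -> Lt t j -> col j S != 0 -> (row j Winv <= cyc t)%MS.
Proof.
move=> tN Ltj nz; rewrite /cyc /cyclesmx sub_capmx; apply/andP; split.
  rewrite supp_msk.
  have -> : row j Winv = row j (msk F (Lt t) *m Winv) by rewrite row_msk_mul Ltj.
  apply: submx_trans (row_sub _ _) _.
  exact: stab_le Winv_upper (Lt_up tN) (submx_refl _).
have dN : dead S (Kt N) j.
  move: nz; rewrite -piv_col0 /dead /Kt; case: (piv S j) => // p _; by rewrite hKN rB_in.
have := rowW_bnd (leqnn N) dN; rewrite /bnd /boundsmx => /submxP [D ->].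
by rewrite sub_kermx -!mulmxA -Aeq AA !mulmx0.
Qed.

Lemma rowG_cyc t i : (t <= N)%N -> Lt t i -> i \notin pivs R -> (row i Ginv <= cyc t)%MS.
Proof.
move=> tN Lti np; rewrite (F1 tN).
have -> : row i Ginv = row i (msk F (fun i => Lt t i && (i \notin pivs R)) *m Ginv).
  by rewrite row_msk_mul Lti np.
exact: row_sub.
Qed.

Definition pfin j := (col j S != 0) && (entry N Lf (pivsimp rA W j) < entry N Kf (pivsimp rB S j))%N.
Definition pess i := (col i R == 0) && (i \notin pivs R).
Definition idx : seq ('I_n * bool) :=
  [seq (j, true) | j <- enum 'I_n & pfin j] ++ [seq (i, false) | i <- enum 'I_n & pess i].
Definition bar (x : 'I_n * bool) : nat * option nat :=
  if x.2 then (entry N Lf (pivsimp rA W x.1), Some (entry N Kf (pivsimp rB S x.1)))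
  else (entry N Lf (pivsimp rA V x.1), None).
Definition rep (x : 'I_n * bool) : 'rV[F]_n := if x.2 then row x.1 Winv else row x.1 Ginv.

Lemma idx_uniq : uniq idx.
Proof.
rewrite cat_uniq; apply/and3P; split.
- rewrite map_inj_uniq; [apply: filter_uniq; exact: enum_uniq | by move=> a b []].
- by apply/hasPn => x /mapP [i _ ->]; apply/negP => /mapP [j _ []].
- rewrite map_inj_uniq; [apply: filter_uniq; exact: enum_uniq | by move=> a b []].
Qed.

Lemma mem_idx_t j : ((j, true) \in idx) = pfin j.
Proof.
rewrite mem_cat; apply/orP/idP => [[/mapP [j' jin [ejj]]|/mapP [? _ []]] //|pj].
  by move: jin; rewrite -ejj mem_filter => /andP[].
by left; apply/mapP; exists j; rewrite // mem_filter pj mem_enum.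
Qed.

Lemma mem_idx_f i : ((i, false) \in idx) = pess i.
Proof.
rewrite mem_cat; apply/orP/idP => [[/mapP [? _ []] //|/mapP [i' iin [eii]]]|pj].
  by move: iin; rewrite -eii mem_filter => /andP[].
by right; apply/mapP; exists i; rewrite // mem_filter pj mem_enum.
Qed.

Lemma sum_rows (f : 'I_n -> F) (P : pred 'I_n) (M : 'M[F]_n) :
  \sum_(j <- enum 'I_n | P j) f j *: row j M = (\row_j (if P j then f j else 0)) *m M.
Proof.
rewrite mulmx_sum_row big_enum_cond /= big_mkcond /=; apply: eq_bigr => j _.
by rewrite mxE; case: (P j); rewrite ?scale0r.
Qed.

Lemma main_e : has_barcode N (fun t => (cyc t + bnd t)%MS) bnd (map bar idx).
Proof.
apply: (@barcode_reps F N n (fun t => (cyc t + bnd t)%MS) bnd _ idx bar rep); first exact: idx_uniq.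
move=> t tN; split.
- case=> j [] xin; rewrite /bar /rep /=.
    rewrite (bornE _ hWu hWi tN) => Ltj; apply: submx_trans (addsmxSl _ _).
    by apply: rowW_cyc => //; move: xin; rewrite mem_idx_t => /andP[].
  rewrite (bornE _ hVu hVi tN) => Lti; apply: submx_trans (addsmxSl _ _).
  by apply: rowG_cyc => //; move: xin; rewrite mem_idx_f => /andP[].
- case=> j [] xin; rewrite /bar /rep /deadb //=.
  have nz : col j S != 0 by move: xin; rewrite mem_idx_t => /andP[].
  by rewrite (deadE tN nz) => dj; apply: rowW_bnd.
- rewrite addsmx_sub addsmxSr andbT.
  pose P1 := fun i => Lt t i && pess i.
  pose P2 := fun j => Lt t j && (col j S != 0).
  have dP12 : forall i, P1 i -> P2 i -> False.
    move=> i /andP[_ /andP[/eqP z _]] /andP[_]; by rewrite NZeq z eqxx.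
  pose X1 := msk F P1 *m Ginv; pose X2 := msk F P2 *m Winv.
  have X1c : (X1 <= cyc t)%MS.
    rewrite (F1 tN); apply: submxMr; apply: msk_le => i0 /andP[Li /andP[_ ni]]; by rewrite Li ni.
  have X2c : (X2 <= cyc t)%MS.
    apply/row_subP=> j; rewrite row_msk_mul; case: ifP => [/andP[Lj nz]|_]; last exact: sub0mx.
    exact: rowW_cyc.
  have cap0 : (X1 :&: X2)%MS = 0.
    apply/eqP; rewrite -submx0; apply/row_subP => r.
    set v := row r _.
    have v1 : (v <= X1)%MS by apply: submx_trans (row_sub _ _) (capmxSl _ _).
    have v2 : (v <= X2)%MS by apply: submx_trans (row_sub _ _) (capmxSr _ _).
    case/submxP: v1 => D1 E1; case/submxP: v2 => D2 E2.
    have y0 : D1 *m msk F P1 = 0.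
      apply: (@disj F n (Gm R) W P1 P2 _ (D2 *m msk F P2) (G_upper R) (G_unit R) hWu hWi).
      - by move=> i0 h1; apply/negP => h2; apply: (dP12 i0).
      - exact: submxMl.
      - exact: (submxMl D2 (msk F P2)).
      - by rewrite -!mulmxA -E1 -E2.
    by rewrite E1 /X1 mulmxA y0 mul0mx sub0mx.
  have Xc : (X1 + X2 :=: cyc t)%MS.
    apply/eqmxP; rewrite -(mxrank_leqif_eq (_ : (X1 + X2 <= cyc t)%MS)); last first.
      by rewrite addsmx_sub X1c X2c.
    rewrite mxrank_disjoint_sum // !mxrankMfree ?row_free_unit ?Ginv_unit ?Winv_unit //.
    rewrite -rank_msk_or // (F1 tN) mxrankMfree ?row_free_unit ?Ginv_unit //.
    apply/eqP; congr (\rank _); apply: msk_ext => i; rewrite /P1 /P2 /pess.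
    case: (Lt t i) => //=; case Ep: (i \in pivs R); rewrite /= ?andbF ?andbT.
      move: Ep; rewrite inE => /existsP [j /eqP Ej].
      by rewrite NZeq -piv_col0 (PZ AA hVu hVi hR hRred Ej) eqxx.
    by rewrite NZeq; case: (col i R == 0).
  rewrite -Xc addsmx_sub; apply/andP; split.
    apply/row_subP=> i; rewrite row_msk_mul; case: ifP => [/andP[Li pi]|_]; last exact: sub0mx.
    apply: submx_trans (addsmxSl _ _).
    apply: (sumsmx_seq_sup (x := (i, false))); first by rewrite mem_idx_f.
      by rewrite /bar /= (bornE _ hVu hVi tN).
    by rewrite /rep /= genmxE.
  apply/row_subP=> j; rewrite row_msk_mul; case: ifP => [/andP[Lj nz]|_]; last exact: sub0mx.
  case pj: (pfin j).
    apply: submx_trans (addsmxSl _ _).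
    apply: (sumsmx_seq_sup (x := (j, true))); first by rewrite mem_idx_t.
      by rewrite /bar /= (bornE _ hWu hWi tN).
    by rewrite /rep /= genmxE.
  apply: submx_trans (addsmxSr _ _); apply: rowW_bnd => //.
  rewrite -(deadE tN nz); move/negbT: pj; rewrite /pfin nz /= -leqNgt => H.
  by apply: leq_trans H _; rewrite (bornE _ hWu hWi tN).
- move=> c hc hsum.
  pose y1 : 'rV[F]_n := \row_j (if pfin j then c (j, true) else 0).
  pose y2 : 'rV[F]_n := \row_j (if pess j then c (j, false) else 0).
  have Es : \sum_(x <- idx) c x *: rep x = y1 *m Winv + y2 *m Ginv.
    by rewrite big_cat !big_map !big_filter /= !sum_rows.
  rewrite Es (F2 tN) in hsum.
  case/submxP: hsum => D ED.
  set z := D *m msk F (dead S (Kt t)).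
  have Ey2 : y2 *m Ginv = (z - y1) *m Winv by rewrite mulmxBl -mulmxA -ED addrC addKr.
  have y20 : y2 = 0.
    apply: (@disj F n (Gm R) W pess (fun j => col j S != 0) _ _ (G_upper R) (G_unit R) hWu hWi _ _ _ Ey2).
    - by move=> i /andP[/eqP z0 _]; rewrite NZeq z0 eqxx.
    - by apply/sub_mskP=> r k nk; rewrite mxE (negPf nk).
    - apply: addmx_sub; first by apply: submx_trans (submxMl D _) _; apply: msk_le => j0 /NZdead.
      rewrite eqmx_opp; apply/sub_mskP => r k nk; rewrite mxE /pfin; by rewrite (negPf nk).
  have Ey1 : y1 = z.
    move: Ey2; rewrite y20 mul0mx => /esym /eqP; rewrite mulmxBl subr_eq0 => /eqP E.
    by rewrite -(mulmxK Winv_unit y1) -E mulmxK ?Winv_unit.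
  case=> j [] xin.
    have pj : pfin j by rewrite -mem_idx_t.
    apply/eqP/negPn/negP => cnz.
    have := hc _ xin cnz; rewrite /bar /deadb /= (deadE tN) ?(proj1 (andP pj)) // => /andP[_ nd].
    have : y1 0 j = 0.
      by rewrite Ey1; move/sub_mskP: (submxMl D (msk F (dead S (Kt t)))) => /(_ 0 j nd).
    by rewrite mxE pj => c0; move: cnz; rewrite c0 eqxx.
  have pi : pess j by rewrite -mem_idx_f.
  by move/rowP: y20 => /(_ j); rewrite !mxE pi.
Qed.

End Main.

Section Coord.
Variables (F : fieldType) (m n : nat) (eps : simplex m -> bool).
Variables (e e' : 'I_n -> simplex m) (rho : 'S_n).
Hypothesis He : forall i, e' i = e (rho i).

Let P : 'M[F]_n := perm_mx rho.
Let PT : 'M[F]_n := perm_mx rho^-1.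

Lemma PPT : P *m PT = 1%:M.
Proof. by rewrite /P /PT -perm_mxM mulgV perm_mx1. Qed.
Lemma PTP : PT *m P = 1%:M.
Proof. by rewrite /P /PT -perm_mxM mulVg perm_mx1. Qed.

Lemma bd_conj : bdmx F eps e' = P *m bdmx F eps e *m PT.
Proof.
rewrite /P /PT -col_permE -row_permE; apply/matrixP=> i j; rewrite !mxE !He. by [].
Qed.

Lemma supp_conj X : suppmx F e' X = P *m suppmx F e X *m PT.
Proof.
rewrite /P /PT -col_permE -row_permE; apply/matrixP=> i j; rewrite !mxE He.
by rewrite (inj_eq perm_inj).
Qed.

Lemma bnd_conj X : (boundsmx F eps e' X *m P :=: boundsmx F eps e X)%MS.
Proof.
rewrite /boundsmx supp_conj bd_conj.
have -> : P *m suppmx F e X *m PT *m (P *m bdmx F eps e *m PT) *m P =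
          P *m (suppmx F e X *m bdmx F eps e).
  by rewrite !mulmxA -(mulmxA _ PT P) PTP mulmx1 -(mulmxA _ PT P) PTP mulmx1.
by apply: eqmxMfull; rewrite row_full_unit unitmx_perm.
Qed.

Lemma cyc_conj X : (cyclesmx F eps e' X *m P :=: cyclesmx F eps e X)%MS.
Proof.
rewrite /cyclesmx; apply/eqmxP/andP; split.
  rewrite sub_capmx; apply/andP; split.
    have := capmxSl (suppmx F e' X) (kermx (bdmx F eps e')); rewrite supp_conj.
    case/submxP => D ->; rewrite -!mulmxA PTP mulmx1 mulmxA; exact: submxMl.
  rewrite sub_kermx; have := capmxSr (suppmx F e' X) (kermx (bdmx F eps e')).
  rewrite sub_kermx bd_conj => /eqP H.
  have -> : (suppmx F e' X :&: kermx (P *m bdmx F eps e *m PT))%MS *m P *m bdmx F eps e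
     = (suppmx F e' X :&: kermx (P *m bdmx F eps e *m PT))%MS *m (P *m bdmx F eps e *m PT) *m P.
    by rewrite -!mulmxA PTP mulmx1.
  by rewrite H mul0mx.
have EY : forall Y : 'M[F]_n, Y = Y *m PT *m P by move=> Y; rewrite -mulmxA PTP mulmx1.
rewrite [X in (X <= _)%MS]EY; apply: submxMr; rewrite sub_capmx; apply/andP; split.
  rewrite supp_conj; case/submxP: (capmxSl (suppmx F e X) (kermx (bdmx F eps e))) => D ->.
  have -> : D *m suppmx F e X *m PT = (D *m PT) *m (P *m suppmx F e X *m PT).
    by rewrite !mulmxA -(mulmxA D PT P) PTP mulmx1.
  exact: submxMl.
rewrite sub_kermx bd_conj.
have := capmxSr (suppmx F e X) (kermx (bdmx F eps e)); rewrite sub_kermx => /eqP H.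
by rewrite !mulmxA -(mulmxA _ PT P) PTP mulmx1 H mul0mx.
Qed.

Lemma cyc_conj' X : (cyclesmx F eps e' X :=: cyclesmx F eps e X *m PT)%MS.
Proof.
have -> : cyclesmx F eps e' X = cyclesmx F eps e' X *m P *m PT by rewrite -mulmxA PPT mulmx1.
exact: eqmxMr (cyc_conj X).
Qed.

Lemma bnd_conj' X : (boundsmx F eps e' X :=: boundsmx F eps e X *m PT)%MS.
Proof.
have -> : boundsmx F eps e' X = boundsmx F eps e' X *m P *m PT by rewrite -mulmxA PPT mulmx1.
exact: eqmxMr (bnd_conj X).
Qed.

End Coord.

Theorem corollary3p13
  (F : fieldType) (N m n : nat) (eps : simplex m -> bool)
  (K : {set simplex m}) (Kf Lf : nat -> {set simplex m})
  (hK : is_complex K)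
  (hKf : forall t, (t <= N)%N -> is_complex (Kf t))
  (hLf : forall t, (t <= N)%N -> is_complex (Lf t))
  (hK0 : Kf 0%N = set0) (hL0 : Lf 0%N = set0)
  (hKN : Kf N = K) (hLN : Lf N = K)
  (hKmono : forall t, (t < N)%N -> Kf t \subset Kf t.+1)
  (hLmono : forall t, (t < N)%N -> Lf t \subset Lf t.+1)
  (hLK : forall t, (t <= N)%N -> Lf t \subset Kf t)
  (sigma tau : 'I_n -> simplex m)
  (hsig_inj : injective sigma) (hsig_in : forall i, sigma i \in K)
  (hsig_onto : forall s, s \in K -> exists i, sigma i = s)
  (hsig_ord : forall i j : 'I_n, (i <= j)%N ->
      (entry N Lf (sigma i) <= entry N Lf (sigma j))%N)
  (htau_inj : injective tau) (htau_in : forall i, tau i \in K)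
  (htau_onto : forall s, s \in K -> exists i, tau i = s)
  (htau_ord : forall i j : 'I_n, (i <= j)%N ->
      (entry N Kf (tau i) <= entry N Kf (tau j))%N)
  (A B V W R S : 'M[F]_n)
  (hA : A = \matrix_(i, j) bdcoef F eps (sigma (rev_ord j)) (sigma (rev_ord i)))
  (hB : B = \matrix_(i, j) bdcoef F eps (sigma (rev_ord j)) (tau (rev_ord i)))
  (hVu : upper_triangular V) (hVi : V \in unitmx)
  (hWu : upper_triangular W) (hWi : W \in unitmx)
  (hR : R = A *m V) (hS : S = B *m W)
  (hRred : reduced R) (hSred : reduced S) :
  let rowA := fun i : 'I_n => sigma (rev_ord i) in
  let rowB := fun i : 'I_n => tau (rev_ord i) in
  let k := entry N Kf in
  let l := entry N Lf in
  (forall j : 'I_n, col j S == 0 <-> col j R == 0) /\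
  has_barcode N
    (fun t => (cyclesmx F eps sigma (Lf t) + boundsmx F eps sigma (Kf t))%MS)
    (fun t => boundsmx F eps sigma (Kf t))
    ([seq (l (pivsimp rowA W j), Some (k (pivsimp rowB S j)))
        | j <- enum 'I_n &
          (col j S != 0) && (l (pivsimp rowA W j) < k (pivsimp rowB S j))%N]
     ++
     [seq (l (pivsimp rowA V i), None)
        | i <- enum 'I_n & (col i R == 0) && (i \notin pivs R)]).
Proof.
move=> rowA rowB k l.
have NZ : forall j, (col j S != 0) = (col j R != 0).
  move=> j; exact: (NZeq hsig_onto htau_inj htau_in hA hB hVu hVi hWu hWi hR hS hRred hSred j).
split.
  by move=> j; rewrite -(negbK (col j S == 0)) NZ negbK.
have Hm := main_e hK hKN hLN hKmono hLmono hsig_inj hsig_in hsig_onto hsig_ord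
  htau_inj htau_in htau_ord hA hB hVu hVi hWu hWi hR hS hRred hSred.
move: Hm; rewrite /idx map_cat -!map_comp => Hm.
pose rho : 'S_n := perm (@rev_ord_inj n).
have He : forall i, sigma i = rA sigma (rho i) by move=> i; rewrite /rA permE rev_ordK.
apply: (sq_iso_mulr (unitmx_perm _ rho^-1) _ _ Hm) => t.
  apply: eqmx_trans (adds_eqmx (cyc_conj' F eps He (Lf t)) (bnd_conj' F eps He (Kf t))) _.
  exact: eqmx_sym (addsmxMr _ _ _).
exact: bnd_conj'.
Qed.
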